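(* Let $m\in\mathbb{Z}_{>0}$ and $n\in\mathbb{Z}_{\ge 0}$ with $m\geq n$, and let $\psi=\psi_{m,n}:\mathcal{G}^{(m,n)}\to\mathbb{C}$ be a Whittaker function. If $\psi(I_{m+n-1})\,\psi(J_{m+n-1})\neq 0$, then the induced module $W'=\mathrm{Ind}_{\mathcal{G}^{(m,n)}}^{\mathcal{G}^{(m,0)}}\mathbb{C}w_{\psi}=\mathcal{U}(\mathcal{G}^{(m,0)})\otimes_{\mathcal{U}(\mathcal{G}^{(m,n)})}\mathbb{C}w_\psi$ is an irreducible $\mathcal{G}^{(m,0)}$-module. Moreover, for all $w\in W'$ and all $i\in\mathbb{Z}_{\ge0}$, $$L_{m+n+i}w=\psi(L_{m+n+i})w,\quad H_{m+n+i}w=\psi(H_{m+n+i})w,\quad I_{n+i}w=\psi(I_{n+i})w,\quad J_{n+i}w=\psi(J_{n+i})w.$$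
   Context: $\mathcal{G}$ is the complex Lie algebra with basis $\{L_n,H_n,I_n,J_n,\mathbf{c}_1,\mathbf{c}_2,\mathbf{c}_3: n\in\mathbb{Z}\}$ whose brackets of basis elements are $[L_m,L_n]=(n-m)L_{m+n}+\frac{m^3-m}{12}\delta_{m+n,0}\mathbf{c}_1$, $[L_m,H_n]=nH_{m+n}+m^2\delta_{m+n,0}\mathbf{c}_2$, $[H_m,H_n]=m\delta_{m+n,0}\mathbf{c}_3$, $[L_m,I_n]=(n-m)I_{m+n}$, $[L_m,J_n]=(n-m)J_{m+n}$, $[H_m,I_n]=I_{m+n}$, $[H_m,J_n]=-J_{m+n}$ (and the antisymmetric counterparts), all other brackets of basis elements being zero (so $\mathbf{c}_1,\mathbf{c}_2,\mathbf{c}_3$ are central and the $I$'s and $J$'s commute among themselves). For $m,n\in\mathbb{Z}_{\ge0}$ let $\mathcal{G}^{(m,n)}=\sum_{i\ge0}(\mathbb{C}L_{m+i}+\mathbb{C}H_{m+i}+\mathbb{C}I_{n+i}+\mathbb{C}J_{n+i})+\mathbb{C}\mathbf{c}_1+\mathbb{C}\mathbf{c}_2+\mathbb{C}\mathbf{c}_3$, a subalgebra. A Whittaker function $\psi_{m,n}$ is a Lie algebra homomorphism $\mathcal{G}^{(m,n)}\to\mathbb{C}$ (i.e. a linear map vanishing on $[\mathcal{G}^{(m,n)},\mathcal{G}^{(m,n)}]$); $\mathbb{C}w_{\psi}$ denotes the one-dimensional $\mathcal{G}^{(m,n)}$-module with $x\cdot w_\psi=\psi(x)w_\psi$. *)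

(* Defs.v *)
(* The complex field is R[i] (mathcomp-real-closed) over an
   arbitrary model R : realType of the real numbers. *)
From HB Require Import structures.
From mathcomp Require Import all_boot all_order all_algebra.
From mathcomp Require Import reals.
From mathcomp Require Export complex.
Set Implicit Arguments. Unset Strict Implicit. Unset Printing Implicit Defensive.
Import Order.TTheory GRing.Theory Num.Theory.
Local Open Scope ring_scope.

Inductive gbasis : Type :=
  | BL of int | BH of int | BI of int | BJ of int | Bc1 | Bc2 | Bc3.

Section LieAlg.
Variable R : realType.
Local Notation C := (R[i]).

Definition cint (k : int) : C := k%:~R.
Definition delta0 (k : int) : C := (k == 0)%:R.

(* The bracket [a, b] of two basis elements, as a finite linear combination
   (list of (coefficient, basis element)) of basis elements. *)
Definition brk (a b : gbasis) : seq (C * gbasis) :=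
  match a, b with
  | BL p, BL q => [:: (cint (q - p), BL (p + q));
                      (cint (p ^+ 3 - p) / 12%:R * delta0 (p + q), Bc1)]
  | BL p, BH q => [:: (cint q, BH (p + q)); (cint (p ^+ 2) * delta0 (p + q), Bc2)]
  | BH p, BL q => [:: (- cint p, BH (p + q)); (- (cint (q ^+ 2) * delta0 (p + q)), Bc2)]
  | BH p, BH q => [:: (cint p * delta0 (p + q), Bc3)]
  | BL p, BI q => [:: (cint (q - p), BI (p + q))]
  | BI p, BL q => [:: (- cint (p - q), BI (p + q))]
  | BL p, BJ q => [:: (cint (q - p), BJ (p + q))]
  | BJ p, BL q => [:: (- cint (p - q), BJ (p + q))]
  | BH p, BI q => [:: (1, BI (p + q))]
  | BI p, BH q => [:: (-1, BI (p + q))]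
  | BH p, BJ q => [:: (-1, BJ (p + q))]
  | BJ p, BH q => [:: (1, BJ (p + q))]
  | _, _ => [::]
  end.

Definition inG (m n : nat) (b : gbasis) : bool :=
  match b with
  | BL k | BH k => (m%:Z <= k)
  | BI k | BJ k => (n%:Z <= k)
  | Bc1 | Bc2 | Bc3 => true
  end.

(* A Whittaker function psi_{m,n}: a linear map G^(m,n) -> C (given by its
   values on the basis) vanishing on [G^(m,n), G^(m,n)], i.e. on all brackets
   of basis elements of G^(m,n). *)
Definition whittaker (m n : nat) (psi : gbasis -> C) : Prop :=
  forall a b, inG m n a -> inG m n b ->
    \sum_(p <- brk a b) p.1 * psi p.2 = 0.

(* A G^(m,n)-module structure on the C-vector space V: linear actions of the
   basis elements of G^(m,n) satisfying the bracket relations. *)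
Definition is_rep (m n : nat) (V : lmodType C) (rho : gbasis -> V -> V) : Prop :=
  (forall b, inG m n b -> forall (c : C) (u v : V),
      rho b (c *: u + v) = c *: rho b u + rho b v) /\
  (forall a b, inG m n a -> inG m n b -> forall v : V,
      rho a (rho b v) - rho b (rho a v) = \sum_(p <- brk a b) p.1 *: rho p.2 v).

(* (V, rho, w) is the induced module Ind_{G^(m,n)}^{G^(m,0)} C w_psi
   = U(G^(m,0)) (x)_{U(G^(m,n))} C w_psi, characterized (up to unique
   isomorphism) by its universal property: a G^(m,0)-module with a vector w
   on which G^(m,n) acts by psi, such that for every G^(m,0)-module V' and
   w' in V' on which G^(m,n) acts by psi there is a unique G^(m,0)-module
   homomorphism V -> V' sending w to w'. *)
Definition is_induced (m n : nat) (psi : gbasis -> C)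
    (V : lmodType C) (rho : gbasis -> V -> V) (w : V) : Prop :=
  [/\ is_rep m 0 rho,
      (forall b, inG m n b -> rho b w = psi b *: w) &
      forall (V' : lmodType C) (rho' : gbasis -> V' -> V') (w' : V'),
        is_rep m 0 rho' ->
        (forall b, inG m n b -> rho' b w' = psi b *: w') ->
        exists f : V -> V',
          [/\ (forall (c : C) (u v : V), f (c *: u + v) = c *: f u + f v),
              (forall b, inG m 0 b -> forall v, f (rho b v) = rho' b (f v)),
              f w = w' &
              forall g : V -> V',
                (forall (c : C) (u v : V), g (c *: u + v) = c *: g u + g v) ->
                (forall b, inG m 0 b -> forall v, g (rho b v) = rho' b (g v)) ->
                g w = w' -> forall v, g v = f v]].

Definition irreducible_mod (m : nat) (V : lmodType C) (rho : gbasis -> V -> V) : Prop :=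
  (exists v : V, v != 0) /\
  forall S : V -> Prop,
    S 0 ->
    (forall (c : C) (u v : V), S u -> S v -> S (c *: u + v)) ->
    (forall b, inG m 0 b -> forall v, S v -> S (rho b v)) ->
    (forall v, S v -> v = 0) \/ (forall v, S v).

End LieAlg.

(* Main.v *)
Require Import Defs.
From HB Require Import structures.
From mathcomp Require Import all_boot all_order all_algebra.
From mathcomp Require Import reals complex.
From Stdlib Require Import ClassicalEpsilon Classical.
From mathcomp Require Import zify ring lra.
From mathcomp Require Import mpoly.
Import Order.TTheory GRing.Theory Num.Theory.
Local Open Scope ring_scope.
Set Implicit Arguments. Unset Strict Implicit.

Definition genP (R : realType) (m : nat) (V : lmodType R[i]) (rho : gbasis -> V -> V) (w : V) (v : V) : Prop :=
  forall T : V -> Prop, T w -> (forall (c : R[i]) u v, T u -> T v -> T (c *: u + v)) ->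
    (forall b, inG m 0 b -> forall u, T u -> T (rho b u)) -> T v.
Lemma inG_m0 (m n : nat) b : inG m n b -> inG m 0 b.
Proof. case: b => //= k; lia. Qed.

Lemma brk_in0 (R : realType) (m : nat) a b : inG m 0 a -> inG m 0 b ->
  all (fun p => inG m 0 p.2) (@brk R a b).
Proof.
case: a => [p|p|p|p|||]; case: b => [q|q|q|q|||] //=; rewrite ?andbT; lia.
Qed.

Definition mv (n : nat) (b : gbasis) : option nat :=
  match b with
  | BI (Posz k) => if (k < n)%N then Some k else None
  | BJ (Posz k) => if (k < n)%N then Some (n + k)%N else None
  | _ => None
  end.

Definition xb (n : nat) (j : nat) : gbasis :=
  if (j < n)%N then BI j%:Z else BJ (j - n)%N%:Z.

Definition dc (R : realType) (n : nat) (psi : gbasis -> R[i]) (b : gbasis) (j : nat) : R[i] :=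
  match b with
  | BL p => if (j < n)%N then cint R (j%:Z - p) * psi (BI (p + j%:Z))
            else cint R ((j - n)%N%:Z - p) * psi (BJ (p + (j - n)%N%:Z))
  | BH p => if (j < n)%N then psi (BI (p + j%:Z)) else - psi (BJ (p + (j - n)%N%:Z))
  | _ => 0
  end.

Definition dco (R : realType) (n : nat) (psi : gbasis -> R[i]) (b : gbasis) (o : option nat) : R[i] :=
  if o is Some j then dc n psi b j else 0.

Lemma psiIJ0 (R : realType) (m n : nat) (psi : gbasis -> R[i]) : whittaker m n psi ->
  forall q : int, (m + n)%N%:Z <= q -> psi (BI q) = 0 /\ psi (BJ q) = 0.
Proof.
move=> W q Hq; split.
- have := W (BH m%:Z) (BI (q - m%:Z)) _ _ => /=.
  rewrite big_cons big_nil /= mul1r addr0 addrCA subrr addr0; apply; lia.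
- have := W (BH m%:Z) (BJ (q - m%:Z)) _ _ => /=.
  rewrite big_cons big_nil /= mulN1r addr0 addrCA subrr addr0 => H.
  by apply/eqP; rewrite -oppr_eq0; apply/eqP; apply: H; lia.
Qed.

Lemma mv_None (m n : nat) b : inG m 0 b -> mv n b = None -> inG m n b.
Proof.
case: b => //= -[k|k] //=; case: ifP => // /negbT; rewrite -leqNgt => H _ _; lia.
Qed.

Lemma brk_in1 (R : realType) (m n : nat) a b : (n <= m)%N -> inG m 0 a -> inG m 0 b ->
  all (fun p => inG (m + n) n p.2) (@brk R a b).
Proof.
move=> nm; case: a => [p|p|p|p|||]; case: b => [q|q|q|q|||] //=; rewrite ?andbT; lia.
Qed.

Lemma sym (R : realType) (m n : nat) (psi : gbasis -> R[i]) a b :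
  (n <= m)%N -> whittaker m n psi -> inG m 0 a -> inG m 0 b ->
  \sum_(p <- brk R a b) p.1 * psi p.2 = dco n psi a (mv n b) - dco n psi b (mv n a).
Proof.
move=> nm W Ha Hb.
have W' := W a b.
case: a Ha W' => [p|p|[k|k]|[k|k]|||] //= Ha W'; case: b Hb W' => [q|q|[l|l]|[l|l]|||] //= Hb W';
  rewrite ?big_cons ?big_nil /= ?addr0 in W' *;
  repeat (case: ifP => ?); simpl; repeat (case: ifP => ?); try (exfalso; lia); rewrite ?addKn;
  rewrite ?subrr ?sub0r ?subr0 ?mul1r ?mulN1r ?opprK ?mulNr ?mul1r ?mulN1r in W' *; try (by apply W'; lia);
  try done; by rewrite (addrC q).
Qed.

Definition genb (R : realType) (m : nat) (V : lmodType R[i]) (rho : gbasis -> V -> V) (w : V) : pred V :=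
  fun v => if excluded_middle_informative (genP m rho w v) then true else false.

Lemma genbP (R : realType) (m : nat) (V : lmodType R[i]) (rho : gbasis -> V -> V) (w : V) v :
  genb m rho w v <-> genP m rho w v.
Proof. rewrite /genb; case: excluded_middle_informative => //. Qed.

Lemma genb_closed (R : realType) (m : nat) (V : lmodType R[i]) (rho : gbasis -> V -> V) (w : V) :
  GRing.subsemimod_closed (genb m rho w).
Proof.
have gcomb : forall (c : R[i]) u v, genP m rho w u -> genP m rho w v -> genP m rho w (c *: u + v).
  rewrite /genP => c u v Hu Hv T Tw Tc Tr.

  by apply: (Tc); [exact: (Hu T Tw Tc Tr)|exact: (Hv T Tw Tc Tr)].
have g0 : genP m rho w 0.
  rewrite /genP; move=> T Tw Tc Tr; have := Tc (-1) w w Tw Tw; by rewrite scaleN1r addNr.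
split; [split|].
- by apply/genbP.
- move=> u v /genbP Hu /genbP Hv; apply/genbP; rewrite -[u]scale1r; exact: gcomb.
- move=> a u /genbP Hu; apply/genbP; rewrite -[_ *: _]addr0; exact: gcomb.
Qed.

Definition GT (R : realType) (m : nat) (V : lmodType R[i]) (rho : gbasis -> V -> V) (w : V) :=
  {v : V | genb m rho w v}.

HB.instance Definition _ (R : realType) (m : nat) (V : lmodType R[i]) (rho : gbasis -> V -> V) (w : V) :=
  [isSub for (@sval V (genb m rho w)) : GT m rho w -> V].
HB.instance Definition _ (R : realType) (m : nat) (V : lmodType R[i]) (rho : gbasis -> V -> V) (w : V) :=
  [Choice of GT m rho w by <:].
HB.instance Definition _ (R : realType) (m : nat) (V : lmodType R[i]) (rho : gbasis -> V -> V) (w : V) :=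
  GRing.SubChoice_isSubLmodule.Build _ _ _ (GT m rho w) (genb_closed m rho w).

Lemma valtest (R : realType) (m : nat) (V : lmodType R[i]) (rho : gbasis -> V -> V) (w : V) (x y : GT m rho w) (c : R[i]) (r : seq nat) (F : nat -> GT m rho w):
  val (c *: x + y) = c *: val x + val y /\ val (x - y) = val x - val y /\ val (\sum_(i <- r) F i) = \sum_(i <- r) val (F i).
Proof. split; last split. by rewrite raddfD /=; have := GRing.valZ c x; rewrite /= => ->. by rewrite raddfB. by rewrite raddf_sum. Qed.

Lemma valZ' (R : realType) (m : nat) (V : lmodType R[i]) (rho : gbasis -> V -> V) (w : V) (x : GT m rho w) (c : R[i]) :
  val (c *: x) = c *: val x.
Proof. by have := GRing.valZ c x; rewrite /= => ->. Qed.

Lemma svalD (R : realType) (m : nat) (V : lmodType R[i]) (rho : gbasis -> V -> V) (w : V) (x y : GT m rho w) :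
  sval (x + y) = sval x + sval y.
Proof. reflexivity. Qed.
Lemma svalZ (R : realType) (m : nat) (V : lmodType R[i]) (rho : gbasis -> V -> V) (w : V) (x : GT m rho w) c :
  sval (c *: x) = c *: sval x.
Proof. reflexivity. Qed.

Lemma genA (R : realType) (m n : nat) (psi : gbasis -> R[i]) (V : lmodType R[i]) (rho : gbasis -> V -> V) (w : V) :
  is_induced m n psi rho w ->
  forall T : V -> Prop, T w -> (forall (c : R[i]) u v, T u -> T v -> T (c *: u + v)) ->
    (forall b, inG m 0 b -> forall u, T u -> T (rho b u)) -> forall v, T v.
Proof.
case=> Hrep Hw Hun T Tw Tc Tr v.
have gw : genb m rho w w by apply/genbP => T' ? _ _.
pose w' : GT m rho w := exist _ w gw.
pose rho' b (s : GT m rho w) : GT m rho w := insubd s (rho b (val s)).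
have rv : forall b, inG m 0 b -> forall s, val (rho' b s) = rho b (val s).
  move=> b Hb s; rewrite /rho' insubdK //; apply/genbP => T' T'w T'c T'r.
  apply: (T'r) => //; move/genbP: (valP s) => H; exact: H T' T'w T'c T'r.
have Hrep' : is_rep m 0 rho'.
  split.
  - move=> b Hb c u v'; apply: val_inj; rewrite !(rv b Hb) !raddfD /= ?valZ' (rv b Hb) (rv b Hb).
    by rewrite (Hrep.1 b Hb).
  - move=> a b Ha Hb v'; apply: val_inj; rewrite raddfB /= !rv // Hrep.2 //.
    have := brk_in0 R Ha Hb; elim: (brk R a b) => [|[c p] l IH] /=; first by rewrite !big_nil.
    by case/andP=> Hp Hl; rewrite !big_cons svalD svalZ rv // IH.
have Hw' : forall b, inG m n b -> rho' b w' = psi b *: w'.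
  by move=> b Hb; apply: val_inj; rewrite rv ?(inG_m0 Hb) // valZ' /= Hw.
have [f [fl fh fw fu]] := Hun _ rho' w' Hrep' Hw'.
have [f0 [f0l f0h f0w f0u]] := Hun _ rho w Hrep Hw.
have e1 : forall x, val (f x) = f0 x.
  apply: f0u.
  - by move=> c x y; rewrite fl.
  - by move=> b Hb x; rewrite fh // rv.
  - by rewrite fw.
have e2 : forall x, x = f0 x by apply: f0u.
move/genbP: (valP (f v)); rewrite e1 -e2; apply => //.
Qed.

Lemma inG_mn (m n : nat) b : inG (m + n) n b -> inG m n b.
Proof. case: b => //= k; lia. Qed.

Lemma mv_big (m n : nat) b : inG (m + n) n b -> mv n b = None.
Proof. case: b => //= -[k|k] //= H; case: ifP => //; lia. Qed.

Lemma dc_big (R : realType) (m n : nat) (psi : gbasis -> R[i]) b : whittaker m n psi ->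
  inG (m + n) n b -> forall j, dc n psi b j = 0.
Proof.
move=> W; have P := psiIJ0 W.
case: b => //= p Hp j; case: ifP => _.
- by rewrite (P _ _).1 ?mulr0 //; lia.
- by rewrite (P _ _).2 ?mulr0 //; lia.
- by rewrite (P _ _).1 ?mulr0 //; lia.
- by rewrite (P _ _).2 ?oppr0 //; lia.
Qed.

Lemma rep_lin (R : realType) (m n : nat) (V : lmodType R[i]) (rho : gbasis -> V -> V) :
  is_rep m n rho -> forall b, inG m n b ->
  [/\ rho b 0 = 0, forall c u, rho b (c *: u) = c *: rho b u & forall u v, rho b (u + v) = rho b u + rho b v].
Proof.
case=> L _ b Hb.
have h0 : rho b 0 = 0.
  have E := L b Hb 1 0 0; rewrite !scale1r addr0 in E.
  by apply: (@addrI _ (rho b 0)); rewrite addr0 -E.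
split => //.
- by move=> c u; have := L b Hb c u 0; rewrite !addr0 h0 addr0.
- by move=> u v; have := L b Hb 1 u v; rewrite !scale1r.
Qed.

Lemma sum_scal (R : realType) (V : lmodType R[i]) (rho : gbasis -> V -> V) (psi : gbasis -> R[i])
  (P : gbasis -> bool) (l : seq (R[i] * gbasis)) u :
  all (fun p => P p.2) l -> (forall b, P b -> rho b u = psi b *: u) ->
  \sum_(p <- l) p.1 *: rho p.2 u = (\sum_(p <- l) p.1 * psi p.2) *: u.
Proof.
move=> Hl H; elim: l Hl => [|[c p] l IH] /=; first by rewrite !big_nil scale0r.
by case/andP=> Hp Hl; rewrite !big_cons /= scalerDl IH // H // scalerA.
Qed.

Lemma scalarM (R : realType) (m n : nat) (psi : gbasis -> R[i]) (V : lmodType R[i]) (rho : gbasis -> V -> V) (w : V) :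
  (n <= m)%N -> whittaker m n psi -> is_induced m n psi rho w ->
  forall v a, inG (m + n) n a -> rho a v = psi a *: v.
Proof.
move=> nm W Hi; have Hi' := Hi; case: Hi' => Hrep Hw _.
apply: (genA Hi).
- by move=> a Ha; apply: Hw; apply: inG_mn.
- move=> c u v Hu Hv a Ha.
  have [_ Z D] := rep_lin Hrep (inG_m0 (inG_mn Ha)).
  by rewrite D Z Hu // Hv // scalerDr !scalerA mulrC.
- move=> b Hb u Hu a Ha.
  have Ha0 := inG_m0 (inG_mn Ha).
  have := Hrep.2 a b Ha0 Hb u; move/eqP; rewrite subr_eq => /eqP ->.
  have [_ Z D] := rep_lin Hrep Hb.
  rewrite (Hu a Ha) Z (sum_scal (psi := psi) (P := inG (m + n) n)) ?brk_in1 //.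
  rewrite (sym nm W Ha0 Hb) (mv_big Ha) /=.
  case: (mv n b) => [j|] /=; last by rewrite subrr scale0r add0r.
  by rewrite (dc_big W Ha) subrr scale0r add0r.
Qed.

Definition submod (R : realType) (m : nat) (V : lmodType R[i]) (rho : gbasis -> V -> V) (S : V -> Prop) :=
  (forall (c : R[i]) u v, S u -> S v -> S (c *: u + v)) /\
  (forall b, inG m 0 b -> forall v, S v -> S (rho b v)).

Definition DT (R : realType) (m n : nat) (V : lmodType R[i]) (rho : gbasis -> V -> V) (w : V)
   (T : V -> V) (s : nat -> R[i]) :=
  [/\ forall (c : R[i]) u v, T (c *: u + v) = c *: T u + T v, T w = 0,
      forall j u, (j < n + n)%N -> T (rho (xb n j) u) = rho (xb n j) (T u) + s j *: u &
      forall S, submod m rho S -> forall u, S u -> S (T u)].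

Lemma xb_in (m n j : nat) : inG m 0 (xb n j).
Proof. by rewrite /xb; case: ifP. Qed.

Lemma xb_mv (n j : nat) : (j < n + n)%N -> mv n (xb n j) = Some j.
Proof.
rewrite /xb => Hj; case: ifP => H1 /=; first by rewrite H1.
rewrite ifT; [congr Some; lia | lia].
Qed.

Lemma mv_small (m n : nat) b : inG m n b -> mv n b = None.
Proof. case: b => //= -[k|k] //= H; case: ifP => //; lia. Qed.

Lemma mv_Some (n : nat) b j : mv n b = Some j -> b = xb n j /\ (j < n + n)%N.
Proof.
case: b => //= -[k|k] //=; case: ifP => // H [<-]; rewrite /xb.
- by rewrite H; split => //; lia.
- rewrite ifF; last by lia.
  split; last by lia. by congr BJ; congr Posz; lia.
Qed.

Lemma sub_closed0 (R : realType) (m : nat) (V : lmodType R[i]) (rho : gbasis -> V -> V) S u :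
  submod m rho S -> S u -> S 0.
Proof. by case=> C _ Su; have := C (-1) u u Su Su; rewrite scaleN1r addNr. Qed.

Lemma DT_zero (R : realType) (m n : nat) (psi : gbasis -> R[i]) (V : lmodType R[i]) (rho : gbasis -> V -> V) (w : V) :
  is_induced m n psi rho w -> DT m n rho w (fun _ => 0) (fun _ => 0).
Proof.
case=> Hrep _ _; split => //.
- by move=> c u v; rewrite scaler0 addr0.
- by move=> j u _; have [-> _ _] := rep_lin Hrep (xb_in m n j); rewrite scale0r addr0.
- by move=> S HS u Su; exact: (sub_closed0 HS Su).
Qed.

Lemma DT_comb (R : realType) (m n : nat) (psi : gbasis -> R[i]) (V : lmodType R[i]) (rho : gbasis -> V -> V) (w : V)
   T1 s1 T2 s2 (c : R[i]) :
  is_induced m n psi rho w -> DT m n rho w T1 s1 -> DT m n rho w T2 s2 ->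
  DT m n rho w (fun v => c *: T1 v + T2 v) (fun j => c * s1 j + s2 j).
Proof.
case=> Hrep _ _ [L1 w1 X1 S1] [L2 w2 X2 S2]; split.
- move=> c' u v; rewrite L1 L2 !scalerDr !scalerA mulrC.
  by rewrite -!addrA; congr (_ + _); rewrite addrCA.
- by rewrite w1 w2 scaler0 addr0.
- move=> j u Hj; have [_ Z D] := rep_lin Hrep (xb_in m n j).
  rewrite X1 // X2 // D Z scalerDr scalerDl -scalerA.
  by rewrite -!addrA; congr (_ + _); rewrite addrCA.
- move=> S HS u Su; apply: HS.1; [exact: S1|exact: S2].
Qed.

Lemma DT_ext (R : realType) (m n : nat) (V : lmodType R[i]) (rho : gbasis -> V -> V) (w : V) T s s' :
  DT m n rho w T s -> (forall j, (j < n + n)%N -> s j = s' j) -> DT m n rho w T s'.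
Proof. by case=> L W X S H; split => // j u Hj; rewrite X // H. Qed.

Lemma DT_op (R : realType) (m n : nat) (psi : gbasis -> R[i]) (V : lmodType R[i]) (rho : gbasis -> V -> V) (w : V) a :
  (n <= m)%N -> whittaker m n psi -> is_induced m n psi rho w -> inG m n a ->
  DT m n rho w (fun v => rho a v - psi a *: v) (dc n psi a).
Proof.
move=> nm W Hi Ha; have Hi' := Hi; case: Hi' => Hrep Hw _.
have Ha0 := inG_m0 Ha.
have [_ Za Da] := rep_lin Hrep Ha0.
split.
- move=> c u v; rewrite Da Za scalerDr !scalerA mulrC -!scalerA.
  by rewrite scalerBr -!addrA; congr (_ + _); rewrite addrCA opprD addrA.
- by rewrite Hw // subrr.
- move=> j u Hj; have Hb := xb_in m n j; have [_ Z D] := rep_lin Hrep Hb.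
  have := Hrep.2 a (xb n j) Ha0 Hb u; move/eqP; rewrite subr_eq => /eqP ->.
  rewrite (sum_scal (psi := psi) (P := inG (m + n) n)) ?brk_in1 //; last first.
    by move=> b Hb'; apply: (scalarM nm W Hi).
  rewrite (sym nm W Ha0 Hb) (mv_small Ha) xb_mv //= subr0.
  by rewrite D -(scaleNr (psi a) u) Z scaleNr [RHS]addrC addrA.
- move=> S [C Rr] u Su; rewrite addrC -scaleNr; apply: C => //; exact: Rr.
Qed.

Inductive Gd (R : realType) (n : nat) (V : lmodType R[i]) (rho : gbasis -> V -> V) (w : V) : nat -> V -> Prop :=
  | Gw d (c : R[i]) : Gd n rho w d (c *: w)
  | Gadd d (c : R[i]) u v : Gd n rho w d u -> Gd n rho w d v -> Gd n rho w d (c *: u + v)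
  | GX d j u : (j < n + n)%N -> Gd n rho w d u -> Gd n rho w d.+1 (rho (xb n j) u).

Lemma Gd0 (R : realType) (n : nat) (V : lmodType R[i]) (rho : gbasis -> V -> V) (w : V) d :
  Gd n rho w d 0.
Proof. by rewrite -(scale0r w); apply: Gw. Qed.

Lemma Gd_mono (R : realType) (n : nat) (V : lmodType R[i]) (rho : gbasis -> V -> V) (w : V) d u :
  Gd n rho w d u -> Gd n rho w d.+1 u.
Proof.
elim=> {d u} [d c|d c u v _ IHu _ IHv|d j u Hj _ IH]; first exact: Gw.
- exact: Gadd.
- exact: GX.
Qed.

Lemma Gd_monoT (R : realType) (n : nat) (V : lmodType R[i]) (rho : gbasis -> V -> V) (w : V) d d' u :
  (d <= d')%N -> Gd n rho w d u -> Gd n rho w d' u.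
Proof.
move=> H; rewrite -(subnKC H); elim: (d' - d)%N => [|k IH] Hu; first by rewrite addn0.
by rewrite addnS; apply: Gd_mono; apply: IH.
Qed.

Lemma Gd_0 (R : realType) (n : nat) (V : lmodType R[i]) (rho : gbasis -> V -> V) (w : V) u :
  Gd n rho w 0 u -> exists c, u = c *: w.
Proof.
move=> H; remember 0%N as d eqn:Ed; move: Ed.
elim: H => {d u} [d c|d c u v _ IHu _ IHv|d j u Hj _ IH] Ed.
- by exists c.
- have [cu ->] := IHu Ed; have [cv ->] := IHv Ed; exists (c * cu + cv).
  by rewrite scalerDl scalerA.
- by [].
Qed.

Lemma DT_lower (R : realType) (m n : nat) (V : lmodType R[i]) (rho : gbasis -> V -> V) (w : V) T s d u :
  is_rep m 0 rho -> DT m n rho w T s -> Gd n rho w d u ->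
  (if d is d'.+1 then Gd n rho w d' (T u) else T u = 0).
Proof.
move=> Hrep [L Tw X _].
have T0 : T 0 = 0.
  have := L 1 0 0; rewrite !scale1r addr0 => E.
  by apply: (@addrI _ (T 0)); rewrite addr0 -E.
have TZ : forall c v, T (c *: v) = c *: T v by move=> c v; rewrite -[c *: v]addr0 L T0 addr0.
elim=> {d u} [d c|d c u v _ IHu _ IHv|d j u Hj Hu IH].
- by rewrite TZ Tw scaler0; case: d => // d; apply: Gd0.
- rewrite L; case: d IHu IHv => [-> ->|d IHu IHv]; first by rewrite scaler0 addr0.
  exact: Gadd.
- rewrite X //; case: d Hu IH => [Hu ->|d Hu IH].
  + have [-> _ _] := rep_lin Hrep (xb_in m n j); rewrite add0r.
    by rewrite -[_ *: u]addr0; apply: Gadd Hu _; apply: Gd0.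
  + by rewrite addrC; apply: Gadd Hu _; apply: GX.
Qed.

Lemma DT_Gd (R : realType) (m n : nat) (V : lmodType R[i]) (rho : gbasis -> V -> V) (w : V) T s d u :
  is_rep m 0 rho -> DT m n rho w T s -> Gd n rho w d u -> Gd n rho w d (T u).
Proof.
move=> Hrep HT Hu; have := DT_lower Hrep HT Hu.
case: d Hu => [_ ->|d _ H]; [exact: Gd0 | exact: Gd_mono].
Qed.

Lemma Gd_all (R : realType) (m n : nat) (psi : gbasis -> R[i]) (V : lmodType R[i]) (rho : gbasis -> V -> V) (w : V) :
  (n <= m)%N -> whittaker m n psi -> is_induced m n psi rho w ->
  forall v, exists d, Gd n rho w d v.
Proof.
move=> nm W Hi; have Hi' := Hi; case: Hi' => Hrep Hw _.
apply: (genA Hi).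
- by exists 0%N; have := @Gw R n V rho w 0 1; rewrite scale1r.
- move=> c u v [d1 H1] [d2 H2]; exists (maxn d1 d2); apply: Gadd.
  + by apply: Gd_monoT H1; rewrite leq_maxl.
  + by apply: Gd_monoT H2; rewrite leq_maxr.
- move=> b Hb u [d Hu]; case E: (mv n b) => [j|].
  + have [-> Hj] := mv_Some E; exists d.+1; exact: GX.
  + have Hb' := mv_None Hb E; exists d.
    have HT := DT_op nm W Hi Hb'.
    rewrite -(subrK (psi b *: u) (rho b u)) addrC; apply: Gadd => //.
    exact: (DT_Gd Hrep HT Hu).
Qed.

Definition Sp (R : realType) (m n : nat) (V : lmodType R[i]) (rho : gbasis -> V -> V) (w : V) (s : nat -> R[i]) :=
  exists T, DT m n rho w T s.

Lemma Sp_zero (R : realType) (m n : nat) (psi : gbasis -> R[i]) (V : lmodType R[i]) (rho : gbasis -> V -> V) (w : V) s :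
  is_induced m n psi rho w -> (forall j, (j < n + n)%N -> s j = 0) -> Sp m n rho w s.
Proof. move=> Hi H; exists (fun _ => 0); apply: DT_ext (DT_zero Hi) _ => j Hj; by rewrite H. Qed.

Lemma Sp_comb (R : realType) (m n : nat) (psi : gbasis -> R[i]) (V : lmodType R[i]) (rho : gbasis -> V -> V) (w : V)
   s s1 s2 c1 c2 :
  is_induced m n psi rho w -> Sp m n rho w s1 -> Sp m n rho w s2 ->
  (forall j, (j < n + n)%N -> s j = c1 * s1 j + c2 * s2 j) -> Sp m n rho w s.
Proof.
move=> Hi [T1 H1] [T2 H2] E.
have H3 := DT_comb c2 Hi H2 (DT_zero Hi).
have H4 := DT_comb c1 Hi H1 H3.
eexists; apply: DT_ext H4 _ => j Hj; by rewrite E // addr0.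
Qed.

Lemma Sp_op (R : realType) (m n : nat) (psi : gbasis -> R[i]) (V : lmodType R[i]) (rho : gbasis -> V -> V) (w : V) a s :
  (n <= m)%N -> whittaker m n psi -> is_induced m n psi rho w -> inG m n a ->
  (forall j, (j < n + n)%N -> s j = dc n psi a j) -> Sp m n rho w s.
Proof.
move=> nm W Hi Ha E; eexists; apply: DT_ext (DT_op nm W Hi Ha) _ => j Hj; by rewrite E.
Qed.

Definition lvl (n i : nat) := if (i < n)%N then i else (i - n)%N.

Lemma dc_hi (R : realType) (m n : nat) (psi : gbasis -> R[i]) (k i : nat) :
  whittaker m n psi -> (k < n)%N -> (i < n + n)%N -> (k < lvl n i)%N ->
  dc n psi (BL (m + n - 1 - k)%N%:Z) i = 0 /\ dc n psi (BH (m + n - 1 - k)%N%:Z) i = 0.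
Proof.
move=> W kn Hi; have P := psiIJ0 W; rewrite /lvl /dc; case: ifP => H Hk.
- by rewrite (P _ _).1 ?mulr0 //; lia.
- by rewrite (P _ _).2 ?mulr0 ?oppr0 //; lia.
Qed.

Lemma Sp_level (R : realType) (m n : nat) (psi : gbasis -> R[i]) (V : lmodType R[i]) (rho : gbasis -> V -> V) (w : V) :
  (n <= m)%N -> whittaker m n psi -> is_induced m n psi rho w ->
  psi (BI (m + n - 1)%N%:Z) * psi (BJ (m + n - 1)%N%:Z) != 0 ->
  forall k, (k <= n)%N -> forall s, (forall i, (i < n + n)%N -> (k <= lvl n i)%N -> s i = 0) -> Sp m n rho w s.
Proof.
move=> nm W Hi Hab.
set a := psi (BI (m + n - 1)%N%:Z); set b := psi (BJ (m + n - 1)%N%:Z).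
have /norP [Ha Hb] : ~~ ((a == 0) || (b == 0)) by rewrite -mulf_eq0.
have a2 : a + a != 0 by rewrite -mulr2n mulrn_eq0 negb_or Ha.
have b2 : b + b != 0 by rewrite -mulr2n mulrn_eq0 negb_or Hb.
elim=> [|k IH] kn s Hs.
  by apply: Sp_zero Hi _ => i Hi'; apply: Hs.
set p : int := (m + n - 1 - k)%N%:Z.
have HL : inG m n (BL p) by rewrite /= /p; lia.
have HH : inG m n (BH p) by rewrite /= /p; lia.
set z := cint R (k%:Z - p).
have z0 : z != 0 by rewrite /z /cint intr_eq0 /p; lia.
have Eak : p + k%:Z = (m + n - 1)%N%:Z by rewrite /p; lia.
have En : ((n + k) - n)%N = k by rewrite addKn.
have Enk : (n + k < n)%N = false by lia.
have SL := Sp_op nm W Hi HL (fun j _ => erefl).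
have SH := Sp_op nm W Hi HH (fun j _ => erefl).
pose u i := z^-1 * dc n psi (BL p) i + 1 * dc n psi (BH p) i.
pose v i := z^-1 * dc n psi (BL p) i + (-1) * dc n psi (BH p) i.
have Su : Sp m n rho w u by apply: Sp_comb Hi SL SH _.
have Sv : Sp m n rho w v by apply: Sp_comb Hi SL SH _.
have uk : u k = a + a by rewrite /u /dc kn Eak mulrA mulVf // mul1r.
have vk : v k = 0 by rewrite /v /dc kn Eak mulrA mulVf // mul1r mulN1r subrr.
have unk : u (n + k)%N = 0.
  by rewrite /u /dc Enk En Eak mulrA mulVf // mul1r mul1r subrr.
have vnk : v (n + k)%N = b + b.
  by rewrite /v /dc Enk En Eak mulrA mulVf // mul1r mulN1r opprK.
have uhi : forall i, (i < n + n)%N -> (k < lvl n i)%N -> u i = 0.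
  by move=> i Hi1 Hi2; rewrite /u /v; have [-> ->] := dc_hi W kn Hi1 Hi2; rewrite !mulr0 addr0.
have vhi : forall i, (i < n + n)%N -> (k < lvl n i)%N -> v i = 0.
  by move=> i Hi1 Hi2; rewrite /u /v; have [-> ->] := dc_hi W kn Hi1 Hi2; rewrite !mulr0 addr0.
have Sul : Sp m n rho w (fun i => if (lvl n i < k)%N then u i else 0).
  by apply: IH; [lia | move=> i _ H; rewrite ltnNge H].
have Svl : Sp m n rho w (fun i => if (lvl n i < k)%N then v i else 0).
  by apply: IH; [lia | move=> i _ H; rewrite ltnNge H].
have lvlk : lvl n k = k by rewrite /lvl kn.
have lvlnk : lvl n (n + k) = k by rewrite /lvl Enk En.
have Sex : Sp m n rho w (fun i => (i == k)%:R).
  apply: Sp_comb Hi Su Sul _ => i Hi1.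
  instantiate (1 := - (a + a)^-1); instantiate (1 := (a + a)^-1).
  case: (ltngtP (lvl n i) k) => H.
  - have -> : (i == k) = false by apply/negbTE/eqP => E; move: H; rewrite E lvlk ltnn.
    by rewrite mulNr addrN.
  - have -> : (i == k) = false by apply/negbTE/eqP => E; move: H; rewrite E lvlk ltnn.
    by rewrite uhi // mulr0 mulr0 addr0.
    rewrite /= ?mulr0 ?addr0.
    move: H; rewrite /lvl; case: ifP => Hin H.
    + by rewrite H eqxx uk mulVf.
    + have -> : i = (n + k)%N by lia.
      by rewrite unk mulr0; case: eqP => //; lia.
have Sey : Sp m n rho w (fun i => (i == (n + k)%N)%:R).
  apply: Sp_comb Hi Sv Svl _ => i Hi1.
  instantiate (1 := - (b + b)^-1); instantiate (1 := (b + b)^-1).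
  case: (ltngtP (lvl n i) k) => H.
  - have -> : (i == (n + k)%N) = false by apply/negbTE/eqP => E; move: H; rewrite E lvlnk ltnn.
    by rewrite mulNr addrN.
  - have -> : (i == (n + k)%N) = false by apply/negbTE/eqP => E; move: H; rewrite E lvlnk ltnn.
    by rewrite vhi // mulr0 mulr0 addr0.
  - rewrite /= ?mulr0 ?addr0.
    move: H; rewrite /lvl; case: ifP => Hin H.
    + rewrite H vk mulr0; case: eqP => //; lia.
    + have -> : i = (n + k)%N by lia.
      by rewrite eqxx vnk mulVf.
have Slow : Sp m n rho w (fun i => if (lvl n i < k)%N then s i else 0).
  by apply: IH; [lia | move=> i _ H; rewrite ltnNge H].
have S1 : Sp m n rho w (fun i => s (n + k)%N * (i == (n + k)%N)%:R + 1 * (if (lvl n i < k)%N then s i else 0)).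
  by apply: Sp_comb Hi Sey Slow _.
apply: Sp_comb Hi Sex S1 _ => i Hi1.
instantiate (1 := 1); instantiate (1 := s k).
rewrite !mul1r.
case: (ltngtP (lvl n i) k) => H.
- have -> : (i == k) = false by apply/negbTE/eqP => E; move: H; rewrite E lvlk ltnn.
  have -> : (i == (n + k)%N) = false by apply/negbTE/eqP => E; move: H; rewrite E lvlnk ltnn.
  by rewrite !mulr0 !add0r.
- have -> : (i == k) = false by apply/negbTE/eqP => E; move: H; rewrite E lvlk ltnn.
  have -> : (i == (n + k)%N) = false by apply/negbTE/eqP => E; move: H; rewrite E lvlnk ltnn.
  rewrite !mulr0 !addr0; exact: Hs.
- rewrite /= ?addr0.
  move: H; rewrite /lvl; case: ifP => Hin H.
  + rewrite H eqxx mulr1; case: eqP; [lia | by rewrite mulr0 addr0].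
  + have -> : i = (n + k)%N by lia.
    rewrite eqxx mulr1; case: eqP; [lia | by rewrite mulr0 add0r].
Qed.

Fixpoint Pp (R : realType) (V : lmodType R[i]) (N : V -> V) (a : R[i]) (k : nat) (v : V) : V :=
  match k with
  | 0 => v
  | k'.+1 => N (Pp N (a + 1) k' v) - a *: Pp N (a + 1) k' v
  end.

Lemma lin0 (R : realType) (V : lmodType R[i]) (f : V -> V) :
  (forall (c : R[i]) u v, f (c *: u + v) = c *: f u + f v) ->
  [/\ f 0 = 0, forall c u, f (c *: u) = c *: f u, forall u v, f (u + v) = f u + f v
    & forall u v, f (u - v) = f u - f v].
Proof.
move=> L.
have f0 : f 0 = 0.
  have E := L 1 0 0; rewrite !scale1r addr0 in E.
  by apply: (@addrI _ (f 0)); rewrite addr0 -E.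
have fZ : forall c u, f (c *: u) = c *: f u by move=> c u; rewrite -[c *: u]addr0 L f0 addr0.
have fD : forall u v, f (u + v) = f u + f v by move=> u v; have := L 1 u v; rewrite !scale1r.
split => // u v; by rewrite -scaleN1r fD fZ scaleN1r.
Qed.

Lemma PpL (R : realType) (V : lmodType R[i]) (N : V -> V) :
  (forall (c : R[i]) u v, N (c *: u + v) = c *: N u + N v) ->
  forall k a (c : R[i]) u v, Pp N a k (c *: u + v) = c *: Pp N a k u + Pp N a k v.
Proof.
move=> NL; elim=> [//|k IH] a c u v /=.
rewrite IH NL scalerDr scalerBr !scalerA [a * c]mulrC.
by rewrite opprD addrACA.
Qed.

Lemma PpX (R : realType) (V : lmodType R[i]) (N X : V -> V) :
  (forall (c : R[i]) u v, N (c *: u + v) = c *: N u + N v) ->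
  (forall (c : R[i]) u v, X (c *: u + v) = c *: X u + X v) ->
  (forall u, N (X u) = X (N u) + X u) ->
  forall k a u, Pp N a k (X u) = X (Pp N (a - 1) k u).
Proof.
move=> NL XL NX; have [_ XZ XD XB] := lin0 XL.
elim=> [//|k IH] a u /=.
rewrite IH addrK subrK NX XB XZ.
by rewrite scalerBl scale1r opprB addrA.
Qed.

Lemma Ppw (R : realType) (V : lmodType R[i]) (N : V -> V) (w : V) :
  (forall (c : R[i]) u v, N (c *: u + v) = c *: N u + N v) -> N w = 0 ->
  forall k a, exists c, Pp N a k w = c *: w.
Proof.
move=> NL Nw; have [_ NZ _ _] := lin0 NL.
elim=> [|k IH] a /=; first by exists 1; rewrite scale1r.
have [c ->] := IH (a + 1); exists (- (a * c)).
by rewrite NZ Nw scaler0 sub0r scalerA scaleNr.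
Qed.

Lemma PpN0 (R : realType) (V : lmodType R[i]) (N : V -> V) u :
  (forall (c : R[i]) u v, N (c *: u + v) = c *: N u + N v) -> N u = 0 ->
  forall k a, Pp N a k u = (\prod_(i < k) (- (a + i%:R))) *: u.
Proof.
move=> NL Nu; have [_ NZ _ _] := lin0 NL.
elim=> [|k IH] a /=; first by rewrite big_ord0 scale1r.
rewrite IH NZ Nu scaler0 sub0r big_ord_recl /= addr0 scalerA -scaleNr mulNr.
congr (- (a * _) *: u); apply: eq_bigr => i _.
by rewrite /bump leq0n add1n -natr1 addrA [in RHS]addrAC.
Qed.

Lemma Pp_kill (R : realType) (m n : nat) (V : lmodType R[i]) (rho : gbasis -> V -> V) (w : V) (N : V -> V) :
  is_rep m 0 rho ->
  (forall (c : R[i]) u v, N (c *: u + v) = c *: N u + N v) -> N w = 0 ->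
  (forall j u, (j < n + n)%N -> N (rho (xb n j) u) = rho (xb n j) (N u) + rho (xb n j) u) ->
  forall d u, Gd n rho w d u -> Pp N 0 d.+1 u = 0.
Proof.
move=> Hrep NL Nw NX d u; have [N0 NZ _ _] := lin0 NL.
have PL := PpL NL.
elim=> {d u} [d c|d c u v _ IHu _ IHv|d j u Hj Hu IH].
- have [_ PZ' _ _] := lin0 (PL d.+1 0).
  rewrite PZ' /=; have [k ->] := Ppw NL Nw d (0 + 1).
  by rewrite NZ Nw scale0r scaler0 subr0 scaler0.
- have [_ _ PD _] := lin0 (PL d.+1 0); by rewrite PL IHu IHv scaler0 addr0.
- have XL := (rep_lin Hrep (xb_in m n j)).
  have XL' : forall (c : R[i]) u v, rho (xb n j) (c *: u + v) = c *: rho (xb n j) u + rho (xb n j) v.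
    by move=> c u' v'; rewrite (Hrep.1 _ (xb_in m n j)).
  rewrite (PpX NL XL' (fun u => NX j u Hj)).
  have -> : Pp N (0 - 1) d.+2 u = 0.
    have -> : Pp N (0 - 1) d.+2 u = N (Pp N (0 - 1 + 1) d.+1 u) - (0 - 1) *: Pp N (0 - 1 + 1) d.+1 u by [].
    by rewrite subrK IH N0 scaler0 subr0.
  by case: XL.
Qed.

Lemma Pp_const (R : realType) (m n : nat) (V : lmodType R[i]) (rho : gbasis -> V -> V) (w : V) (N : V -> V) :
  is_rep m 0 rho ->
  (forall (c : R[i]) u v, N (c *: u + v) = c *: N u + N v) -> N w = 0 ->
  (forall j u, (j < n + n)%N -> N (rho (xb n j) u) = rho (xb n j) (N u) + rho (xb n j) u) ->
  forall d u, Gd n rho w d u -> exists c, Pp N 1 d u = c *: w.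
Proof.
move=> Hrep NL Nw NX d u; have PL := PpL NL.
elim=> {d u} [d c|d c u v _ IHu _ IHv|d j u Hj Hu IH].
- have [_ PZ _ _] := lin0 (PL d 1); rewrite PZ; have [k ->] := Ppw NL Nw d 1.
  by exists (c * k); rewrite scalerA.
- rewrite PL; have [cu ->] := IHu; have [cv ->] := IHv.
  by exists (c * cu + cv); rewrite scalerDl scalerA.
- have XL' : forall (c : R[i]) u v, rho (xb n j) (c *: u + v) = c *: rho (xb n j) u + rho (xb n j) v.
    by move=> c u' v'; rewrite (Hrep.1 _ (xb_in m n j)).
  rewrite (PpX NL XL' (fun u => NX j u Hj)) subrr (Pp_kill Hrep NL Nw NX Hu).
  exists 0; rewrite scale0r; by case: (rep_lin Hrep (xb_in m n j)).
Qed.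

Lemma N_kernel (R : realType) (m n : nat) (V : lmodType R[i]) (rho : gbasis -> V -> V) (w : V) (N : V -> V) :
  is_rep m 0 rho ->
  (forall (c : R[i]) u v, N (c *: u + v) = c *: N u + N v) -> N w = 0 ->
  (forall j u, (j < n + n)%N -> N (rho (xb n j) u) = rho (xb n j) (N u) + rho (xb n j) u) ->
  forall d u, Gd n rho w d u -> N u = 0 -> exists c, u = c *: w.
Proof.
move=> Hrep NL Nw NX d u Hu Nu.
have [c Hc] := Pp_const Hrep NL Nw NX Hu.
rewrite (PpN0 NL Nu) in Hc.
set k := \prod_(i < d) _ in Hc.
have k0 : k != 0.
  rewrite /k; apply/prodf_neq0 => i _; rewrite oppr_eq0 addrC natr1 pnatr_eq0 //.
exists (k^-1 * c); by rewrite -scalerA -Hc scalerA mulVf // scale1r.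
Qed.

Lemma rho_sum (R : realType) (V : lmodType R[i]) (f : V -> V) (k : nat) (F : 'I_k -> V) :
  (forall (c : R[i]) u v, f (c *: u + v) = c *: f u + f v) ->
  f (\sum_(j < k) F j) = \sum_(j < k) f (F j).
Proof.
move=> L; have [f0 _ fD _] := lin0 L.
apply: (big_rec2 (fun x y => f x = y)); first exact: f0.
by move=> i x y _ <-; rewrite fD.
Qed.

Lemma Xcomm (R : realType) (m n : nat) (V : lmodType R[i]) (rho : gbasis -> V -> V) i j u :
  is_rep m 0 rho -> rho (xb n i) (rho (xb n j) u) = rho (xb n j) (rho (xb n i) u).
Proof.
move=> Hrep; apply/eqP; rewrite -subr_eq0; apply/eqP.
rewrite (Hrep.2 _ _ (xb_in m n i) (xb_in m n j)).
by rewrite /xb; case: ifP; case: ifP; rewrite /= big_nil.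
Qed.

Lemma N_props (R : realType) (m n : nat) (V : lmodType R[i]) (rho : gbasis -> V -> V) (w : V) (D : nat -> V -> V) :
  is_rep m 0 rho -> (forall j, (j < n + n)%N -> DT m n rho w (D j) (fun i => (i == j)%:R)) ->
  let N := fun v => \sum_(j < n + n) rho (xb n j) (D j v) in
  [/\ forall (c : R[i]) u v, N (c *: u + v) = c *: N u + N v, N w = 0,
      forall j u, (j < n + n)%N -> N (rho (xb n j) u) = rho (xb n j) (N u) + rho (xb n j) u
    & forall u, (forall j, (j < n + n)%N -> D j u = 0) -> N u = 0].
Proof.
move=> Hrep HD N.
have XL : forall j (c : R[i]) u v, rho (xb n j) (c *: u + v) = c *: rho (xb n j) u + rho (xb n j) v.
  by move=> j c u v; rewrite (Hrep.1 _ (xb_in m n j)).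
split.
- move=> c u v; rewrite /N scaler_sumr -big_split /=; apply: eq_bigr => j _.
  by case: (HD j (ltn_ord j)) => L _ _ _; rewrite L XL.
- rewrite /N big1 // => j _; case: (HD j (ltn_ord j)) => _ -> _ _.
  by have [-> _ _] := rep_lin Hrep (xb_in m n j).
- move=> i u Hi; rewrite /N (rho_sum _ (XL i)).
  have [_ Zi Di] := rep_lin Hrep (xb_in m n i).
  transitivity (\sum_(j < n + n) (rho (xb n i) (rho (xb n j) (D j u)) + (i == j)%:R *: rho (xb n j) u)).
    apply: eq_bigr => j _; case: (HD j (ltn_ord j)) => _ _ X _.
    have [_ Zj Dj] := rep_lin Hrep (xb_in m n j).
    by rewrite X // Dj Zj (Xcomm n i j _ Hrep).
  rewrite big_split /=; congr (_ + _).
  rewrite (bigD1 (Ordinal Hi)) //= eqxx scale1r big1 ?addr0 // => j Hj.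
  have -> : (i == j) = false.
    apply/negbTE; apply: contra Hj => /eqP E; apply/eqP; apply: val_inj; by rewrite /= E.
  by rewrite scale0r.
- move=> u H; rewrite /N big1 // => j _; rewrite H //.
  by have [-> _ _] := rep_lin Hrep (xb_in m n j).
Qed.

Lemma reduce (R : realType) (m n : nat) (V : lmodType R[i]) (rho : gbasis -> V -> V) (w : V) (D : nat -> V -> V) S :
  is_rep m 0 rho -> (forall j, (j < n + n)%N -> DT m n rho w (D j) (fun i => (i == j)%:R)) ->
  submod m rho S -> forall d u, Gd n rho w d u -> u != 0 -> S u -> S w.
Proof.
move=> Hrep HD HS; have [NL Nw NX Nk] := N_props Hrep HD.
elim=> [|d IH] u Hu une Su.
all: case: (classic (exists j, (j < n + n)%N /\ D j u != 0)) => [[j [Hj Hne]] | Hno].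
- by move: Hne; rewrite (DT_lower Hrep (HD j Hj) Hu) eqxx.
- have H : forall j, (j < n + n)%N -> D j u = 0.
    move=> j Hj; case: (eqVneq (D j u) 0) => // Hne; exfalso; apply: Hno; by exists j.
  have [c Ec] := N_kernel Hrep NL Nw NX Hu (Nk u H).
  have c0 : c != 0 by apply: contra une; move/eqP => E; rewrite Ec E scale0r.
  have -> : w = c^-1 *: u + 0 by rewrite addr0 Ec scalerA mulVf // scale1r.
  apply: HS.1 => //; exact: (sub_closed0 HS Su).
- apply: (IH (D j u)) => //; first exact: (DT_lower Hrep (HD j Hj) Hu).
  by case: (HD j Hj) => _ _ _ HSj; exact: HSj S HS u Su.
- have H : forall j, (j < n + n)%N -> D j u = 0.
    move=> j Hj; case: (eqVneq (D j u) 0) => // Hne; exfalso; apply: Hno; by exists j.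
  have [c Ec] := N_kernel Hrep NL Nw NX Hu (Nk u H).
  have c0 : c != 0 by apply: contra une; move/eqP => E; rewrite Ec E scale0r.
  have -> : w = c^-1 *: u + 0 by rewrite addr0 Ec scalerA mulVf // scale1r.
  apply: HS.1 => //; exact: (sub_closed0 HS Su).
Qed.

Lemma irr (R : realType) (m n : nat) (psi : gbasis -> R[i]) (V : lmodType R[i]) (rho : gbasis -> V -> V) (w : V) :
  (n <= m)%N -> whittaker m n psi ->
  psi (BI (m + n - 1)%N%:Z) * psi (BJ (m + n - 1)%N%:Z) != 0 ->
  is_induced m n psi rho w -> w != 0 -> irreducible_mod m rho.
Proof.
move=> nm W Hab Hi w0; have Hi' := Hi; case: Hi' => Hrep Hw _.
have HD0 : forall j, exists T, (j < n + n)%N -> DT m n rho w T (fun i => (i == j)%:R).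
  move=> j; case: (ltnP j (n + n)) => Hj; last by exists id => H; exfalso; lia.
  have [T HT] : Sp m n rho w (fun i => (i == j)%:R).
    apply: (Sp_level nm W Hi Hab (leqnn n)) => i Hi1; rewrite /lvl; case: ifP => ? ?; exfalso; lia.
  by exists T.
pose D := fun j => proj1_sig (constructive_indefinite_description _ (HD0 j)).
have HD : forall j, (j < n + n)%N -> DT m n rho w (D j) (fun i => (i == j)%:R).
  by move=> j Hj; exact: (proj2_sig (constructive_indefinite_description _ (HD0 j)) Hj).
split; first by exists w.
move=> S S0 Sc Sr.
case: (classic (exists v, S v /\ v != 0)) => [[v [Sv vne]] | H].
- right; have HS : submod m rho S by split.
  have [d Hd] := Gd_all nm W Hi v.
  have Sw := reduce Hrep HD HS Hd vne Sv.
  exact: (genA Hi).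
- left => v Sv; case: (eqVneq v 0) => // vne; exfalso; apply: H; by exists v.
Qed.
Lemma mderivXi (F : fieldType) (k : nat) (i j : 'I_k) : mderiv j ('X_i : {mpoly F[k]}) = (j == i)%:R.
Proof.
rewrite mderivX mnm1E; case: eqP => [<-|ne].
- have -> : (U_(i) - U_(i))%MM = 0%MM by apply/mnmP => l; rewrite mnmBE subnn mnm0E.
  by rewrite mpolyX0 scale1r eqxx.
- rewrite scale0r; case: eqP => // E; by case: ne.
Qed.

Definition Xo (R : realType) (n : nat) (o : option nat) : {mpoly R[i][n + n]} :=
  if o is Some j then (match (insub j : option 'I_(n + n)) with Some i => 'X_i | None => 0 end) else 0.

Definition Dm (R : realType) (n : nat) (psi : gbasis -> R[i]) (b : gbasis) (p : {mpoly R[i][n + n]}) :=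
  \sum_(i < n + n) dc n psi b i *: mderiv i p.
Arguments Dm {R} n psi b p.

Definition rhoM (R : realType) (n : nat) (psi : gbasis -> R[i]) (b : gbasis) (p : {mpoly R[i][n + n]}) :=
  (if mv n b is Some _ then 0 else psi b) *: p + Dm n psi b p + Xo R n (mv n b) * p.
Arguments rhoM {R} n psi b p.

Lemma DmL (R : realType) (n : nat) (psi : gbasis -> R[i]) b (c : R[i]) p q :
  Dm n psi b (c *: p + q) = c *: Dm n psi b p + Dm n psi b q.
Proof.
rewrite /Dm scaler_sumr -big_split /=; apply: eq_bigr => i _.
by rewrite mderivD mderivZ scalerDr !scalerA mulrC.
Qed.

Lemma mderiv_sum (R : realType) (k : nat) (i : 'I_k) (l : nat) (F : 'I_l -> {mpoly R[i][k]}) :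
  mderiv i (\sum_(j < l) F j) = \sum_(j < l) mderiv i (F j).
Proof.
apply: (big_rec2 (fun x y => mderiv i x = y)); first exact: mderiv0.
by move=> j x y _ <-; rewrite mderivD.
Qed.

Lemma DmC (R : realType) (n : nat) (psi : gbasis -> R[i]) a b p :
  Dm n psi a (Dm n psi b p) = Dm n psi b (Dm n psi a p).
Proof.
rewrite /Dm.
transitivity (\sum_(i < n + n) \sum_(j < n + n) (dc n psi a i * dc n psi b j) *: mderiv i (mderiv j p)).
  apply: eq_bigr => i _; rewrite mderiv_sum scaler_sumr; apply: eq_bigr => j _.
  by rewrite mderivZ scalerA.
rewrite exchange_big; apply: eq_bigr => j _; rewrite mderiv_sum scaler_sumr; apply: eq_bigr => i _.
by rewrite mderivZ scalerA mderiv_comm mulrC.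
Qed.

Lemma DmM (R : realType) (n : nat) (psi : gbasis -> R[i]) a (o : option nat) p :
  (forall j, o = Some j -> (j < n + n)%N) ->
  Dm n psi a (Xo R n o * p) = Xo R n o * Dm n psi a p + dco n psi a o *: p.
Proof.
rewrite /Xo /dco; case: o => [j|] H; last by rewrite !mul0r /Dm big1 ?add0r ?scale0r // => i _; rewrite mderiv0 scaler0.
have Hj := H j erefl; rewrite insubT /=.
rewrite /Dm mulr_sumr.
transitivity (\sum_(i < n + n) ('X_(Sub j Hj) * (dc n psi a i *: mderiv i p) + ((i == Sub j Hj :> 'I_(n+n))%:R * dc n psi a i) *: p)).
  apply: eq_bigr => i _; rewrite mderivM mderivXi scalerDr addrC; congr (_ + _).
    by rewrite scalerAr.
  by case: eqP => _; rewrite ?mul1r ?mul0r ?scaler0 ?scale0r.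
rewrite big_split /=; congr (_ + _).
rewrite -scaler_suml (bigD1 (Sub j Hj)) //= eqxx mul1r big1 ?addr0 // => i /negbTE ->.
by rewrite mul0r.
Qed.

Lemma rhoM_big (R : realType) (m n : nat) (psi : gbasis -> R[i]) b p :
  whittaker m n psi -> inG (m + n) n b -> rhoM n psi b p = psi b *: p.
Proof.
move=> W Hb; rewrite /rhoM (mv_big Hb) /= mul0r addr0 /Dm big1 ?addr0 // => i _.
by rewrite (dc_big W Hb) scale0r.
Qed.

Lemma rhoM_rep (R : realType) (m n : nat) (psi : gbasis -> R[i]) :
  (n <= m)%N -> whittaker m n psi -> is_rep m 0 (rhoM n psi).
Proof.
move=> nm W; split.
- move=> b _ c p q; rewrite /rhoM DmL mulrDr.
  rewrite -!mul_mpolyC; ring.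
- move=> a b Ha Hb p.
  rewrite (sum_scal (psi := psi) (P := inG (m + n) n)) ?brk_in1 //; last first.
    by move=> b0 Hb0; exact: (rhoM_big p W Hb0).
  rewrite (sym nm W Ha Hb).
  have Hsa : forall j, mv n a = Some j -> (j < n + n)%N by move=> j /mv_Some [].
  have Hsb : forall j, mv n b = Some j -> (j < n + n)%N by move=> j /mv_Some [].
  have [_ Za Da _] := lin0 (@DmL R n psi a).
  have [_ Zb Db _] := lin0 (@DmL R n psi b).
  rewrite /rhoM !Da !Za !Db !Zb (@DmM R n psi a _ _ Hsb) (@DmM R n psi b _ _ Hsa) (@DmC R n psi b a) scalerBl.
  set sa := (if mv n a is Some _ then 0 else psi a).
  set sb := (if mv n b is Some _ then 0 else psi b).
  rewrite -!mul_mpolyC; ring.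
Qed.

Lemma model_nonzero (R : realType) (m n : nat) (psi : gbasis -> R[i]) (V : lmodType R[i]) (rho : gbasis -> V -> V) (w : V) :
  (n <= m)%N -> whittaker m n psi -> is_induced m n psi rho w -> w != 0.
Proof.
move=> nm W [Hrep Hw Hun].
have H1 : forall b, inG m n b -> rhoM n psi b 1 = psi b *: 1.
  move=> b Hb; rewrite /rhoM (mv_small Hb) mul0r addr0 /Dm big1 ?addr0 // => i _.
  by rewrite -mpolyC1 mderivC scaler0.
have [f [fl _ fw _]] := Hun _ (rhoM n psi) 1 (rhoM_rep nm W) H1.
apply/eqP => w0; move: fw; rewrite w0.
have f0 : f 0 = 0.
  have E := fl 1 0 0; rewrite !scale1r addr0 in E.
  by apply: (@addrI _ (f 0)); rewrite addr0 -E.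
by rewrite f0 => /eqP; rewrite eq_sym oner_eq0.
Qed.

Unset Implicit Arguments.
Set Strict Implicit.

Theorem proposition3p1 (R : realType) (m n : nat) (psi : gbasis -> R[i])
    (V : lmodType R[i]) (rho : gbasis -> V -> V) (w : V) :
  (0 < m)%N -> (n <= m)%N ->
  whittaker m n psi ->
  psi (BI (m + n - 1)%N%:Z) * psi (BJ (m + n - 1)%N%:Z) != 0 ->
  is_induced m n psi rho w ->
  irreducible_mod m rho /\
  (forall (v : V) (i : nat),
     [/\ rho (BL (m + n + i)%N%:Z) v = psi (BL (m + n + i)%N%:Z) *: v,
         rho (BH (m + n + i)%N%:Z) v = psi (BH (m + n + i)%N%:Z) *: v,
         rho (BI (n + i)%N%:Z) v = psi (BI (n + i)%N%:Z) *: v &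
         rho (BJ (n + i)%N%:Z) v = psi (BJ (n + i)%N%:Z) *: v]).
Proof.
move=> m0 nm W Hab Hi; split.
- exact: (irr nm W Hab Hi (model_nonzero nm W Hi)).
- move=> v k; have S := scalarM nm W Hi v.
  split; apply: S; rewrite /=; lia.
Qed.
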